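(* Let $A\in\mathscr{D}\mathrm{iag}$ with $L(A)>0$. There are constants $\delta=\delta(A)>0$, $c=c(A)>0$ and $C=C(A)<\infty$ such that if $D\in\mathscr{D}\mathrm{iag}$ with $d(D,A)<\delta$, then $$\mathbb{P}\Big[\Big|\tfrac1n\log\|D^{(n)}\|-L(D)\Big|>\varepsilon\Big]\le e^{-c\varepsilon^2n}$$ for all $\varepsilon>0$ and all $n\ge C/\varepsilon$.
   Context: $\mathrm{SL}_2(\mathbb{R})$ denotes real $2\times2$ matrices with determinant $\pm1$. $\Sigma=\{1,\dots,k\}$, $p$ a probability vector with positive entries, $X=\Sigma^{\mathbb{Z}}$, $\mathbb{P}=p^{\mathbb{Z}}$, $T$ the shift. A cocycle $D=(D_1,\dots,D_k)\in\mathrm{SL}_2(\mathbb{R})^k$ acts by $D(x)=D_{x_0}$ with iterates $D^{(n)}(x)=D_{x_{n-1}}\cdots D_{x_0}$; $d(A,D)=\max_j\|A_j-D_j\|$; $L(D)$ is the a.s. limit of $\frac1n\log\|D^{(n)}(x)\|$. $\mathscr{D}\mathrm{iag}$ is the set of cocycles in $\mathrm{SL}_2(\mathbb{R})^k$ admitting two transversal lines each invariant under all $D_j$. *)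

(* Defs.v *)
From HB Require Import structures.
From mathcomp Require Import all_boot all_order all_algebra.
From mathcomp Require Import all_classical all_reals all_analysis.
Set Implicit Arguments. Unset Strict Implicit. Unset Printing Implicit Defensive.
Import Order.TTheory GRing.Theory Num.Theory.
Import numFieldNormedType.Exports.
Local Open Scope classical_set_scope.
Local Open Scope ring_scope.

Section Defs.
Variable R : realType.

Definition vnorm (v : 'cV[R]_2) : R :=
  Num.sqrt (v ord0 ord0 ^+ 2 + v (lift ord0 ord0) ord0 ^+ 2).

Definition opnorm (M : 'M[R]_2) : R :=
  sup [set vnorm (M *m v) | v in [set v : 'cV[R]_2 | vnorm v = 1]].

(* SL_2(R) in the paper's sense: determinant +1 or -1. *)
Definition SL2 (M : 'M[R]_2) : Prop := \det M = 1 \/ \det M = -1.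

Definition is_cocycle (k : nat) (D : 'I_k -> 'M[R]_2) : Prop :=
  forall j, SL2 (D j).

Definition cdist (k : nat) (A D : 'I_k -> 'M[R]_2) : R :=
  \big[Order.max/0]_(j < k) opnorm (A j - D j).

Definition inv_line (M : 'M[R]_2) (u : 'cV[R]_2) : Prop :=
  exists a : R, M *m u = a *: u.

Definition Diag (k : nat) (D : 'I_k -> 'M[R]_2) : Prop :=
  is_cocycle D /\
  exists u v : 'cV[R]_2, \det (row_mx u v) != 0 /\
    forall j, inv_line (D j) u /\ inv_line (D j) v.

(* D^{(n)}(x) = D_{x_{n-1}} ... D_{x_0} for the word w = (x_0, ..., x_{n-1}). *)
Definition cprod (k : nat) (D : 'I_k -> 'M[R]_2) (w : seq 'I_k) : 'M[R]_2 :=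
  foldl (fun M j => D j *m M) 1%:M w.

(* Bernoulli weight of a cylinder [x_0 .. x_{n-1} = w]. *)
Definition wprob (k : nat) (p : 'I_k -> R) (w : seq 'I_k) : R :=
  \prod_(i <- w) p i.

Definition Pn (k : nat) (p : 'I_k -> R) (n : nat) (E : n.-tuple 'I_k -> bool) : R :=
  \sum_(w : n.-tuple 'I_k | E w) wprob p w.

Definition En (k : nat) (p : 'I_k -> R) (n : nat) (f : n.-tuple 'I_k -> R) : R :=
  \sum_(w : n.-tuple 'I_k) wprob p w * f w.

(* Lyapunov exponent L(D) = lim_n (1/n) E[log ||D^{(n)}||]
   (equal to the a.s. limit by Furstenberg--Kesten). *)
Definition Lyap (k : nat) (p : 'I_k -> R) (D : 'I_k -> 'M[R]_2) : R :=
  limn (fun n : nat => n.+1%:R^-1 * En p (fun w : n.+1.-tuple 'I_k => ln (opnorm (cprod D w)))).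

End Defs.

(* Main.v *)
Require Import Defs.
From HB Require Import structures.
From mathcomp Require Import all_boot all_order all_algebra.
From mathcomp Require Import all_classical all_reals all_analysis.
From mathcomp Require Import ring lra.
Import Order.TTheory GRing.Theory Num.Theory.
Import numFieldNormedType.Exports.
Local Open Scope ring_scope.
Set Implicit Arguments. Unset Strict Implicit. Unset Printing Implicit Defensive.
Section Lin.
Variable R : realType.
Implicit Types (u v w : 'cV[R]_2) (M N : 'M[R]_2).
Definition i1 : 'I_2 := lift ord0 ord0.
Definition x0 (v : 'cV[R]_2) := v ord0 ord0.
Definition x1 (v : 'cV[R]_2) := v i1 ord0.
Definition det2 (u v : 'cV[R]_2) := x0 u * x1 v - x1 u * x0 v.

Lemma ord2 (i : 'I_2) : i = ord0 \/ i = i1.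
Proof. case: i => [[|[|m]] Hi]; [left|right|by []]; exact/val_inj. Qed.

Lemma cv2P (v w : 'cV[R]_2) : x0 v = x0 w -> x1 v = x1 w -> v = w.
Proof.
move=> h0 h1; apply/matrixP => i j; rewrite [j]ord1.
by case: (ord2 i) => ->.
Qed.

Lemma det22 (M : 'M[R]_2) : \det M = M ord0 ord0 * M i1 i1 - M ord0 i1 * M i1 ord0.
Proof.
rewrite (expand_det_row _ ord0) !big_ord_recl big_ord0 /cofactor !det_mx11 !mxE /=.
rewrite addr0 /bump /=.
have -> : lift (lift ord0 ord0) (0:'I_1) = ord0 :> 'I_2 by apply/val_inj.
have -> : lift ord0 (0:'I_1) = i1 :> 'I_2 by apply/val_inj.
rewrite /= expr0 expr1; ring.
Qed.

Lemma tr22 (M : 'M[R]_2) : \tr M = M ord0 ord0 + M i1 i1.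
Proof. by rewrite /mxtrace !big_ord_recl big_ord0 addr0. Qed.

Lemma rmxl (u v : 'cV[R]_2) i : @fun_of_matrix R 2 2 (row_mx u v) i ord0 = u i ord0.
Proof. rewrite -(row_mxEl u v i ord0). congr (fun_of_matrix _ _ _). by apply/val_inj. Qed.
Lemma rmxr (u v : 'cV[R]_2) i : @fun_of_matrix R 2 2 (row_mx u v) i i1 = v i ord0.
Proof. rewrite -(row_mxEr u v i ord0). congr (fun_of_matrix _ _ _). by apply/val_inj. Qed.
Lemma rowmx_det (u v : 'cV[R]_2) : \det (row_mx u v) = det2 u v.
Proof. rewrite (det22 (row_mx u v)) /det2 /x0 /x1.
have A := rmxl u v. have B := rmxr u v.
by rewrite (A ord0) (B i1); congr (_ - _); rewrite mulrC -(A i1) -(B ord0).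
Qed.

Lemma mx0 (M : 'M[R]_2) v : x0 (M *m v) = M ord0 ord0 * x0 v + M ord0 i1 * x1 v.
Proof. by rewrite /x0 mxE !big_ord_recl big_ord0 addr0. Qed.
Lemma mx1 (M : 'M[R]_2) v : x1 (M *m v) = M i1 ord0 * x0 v + M i1 i1 * x1 v.
Proof. by rewrite /x1 mxE !big_ord_recl big_ord0 addr0. Qed.
Lemma sx0 a (v : 'cV[R]_2) : x0 (a *: v) = a * x0 v. Proof. by rewrite /x0 mxE. Qed.
Lemma sx1 a (v : 'cV[R]_2) : x1 (a *: v) = a * x1 v. Proof. by rewrite /x1 mxE. Qed.
Lemma ax0 (u v : 'cV[R]_2) : x0 (u + v) = x0 u + x0 v. Proof. by rewrite /x0 mxE. Qed.
Lemma ax1 (u v : 'cV[R]_2) : x1 (u + v) = x1 u + x1 v. Proof. by rewrite /x1 mxE. Qed.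
Lemma bx0 (u v : 'cV[R]_2) : x0 (u - v) = x0 u - x0 v. Proof. by rewrite /x0 !mxE. Qed.
Lemma bx1 (u v : 'cV[R]_2) : x1 (u - v) = x1 u - x1 v. Proof. by rewrite /x1 !mxE. Qed.

Definition mkv (a b : R) : 'cV[R]_2 := \col_i (if i == ord0 then a else b).
Lemma mkv0 a b : x0 (mkv a b) = a. Proof. by rewrite /x0 mxE eqxx. Qed.
Lemma mkv1 a b : x1 (mkv a b) = b. Proof. by rewrite /x1 mxE. Qed.

Lemma decomp (u v w : 'cV[R]_2) :
  det2 u v *: w = det2 w v *: u + det2 u w *: v.
Proof. apply: cv2P; rewrite ?ax0 ?ax1 ?sx0 ?sx1 /det2; ring. Qed.

Lemma det2M (M : 'M[R]_2) u v : det2 (M *m u) (M *m v) = \det M * det2 u v.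
Proof. rewrite /det2 !mx0 !mx1 det22; ring. Qed.
Lemma tr2M (M : 'M[R]_2) u v : det2 (M *m u) v + det2 u (M *m v) = \tr M * det2 u v.
Proof. rewrite /det2 !mx0 !mx1 tr22; ring. Qed.
Lemma det2Zl a u v : det2 (a *: u) v = a * det2 u v.
Proof. rewrite /det2 !sx0 !sx1; ring. Qed.
Lemma det2Zr a u v : det2 u (a *: v) = a * det2 u v.
Proof. rewrite /det2 !sx0 !sx1; ring. Qed.

Lemma vnE v : vnorm v = Num.sqrt (x0 v ^+ 2 + x1 v ^+ 2). Proof. by []. Qed.
Lemma vn_ge0 v : 0 <= vnorm v. Proof. exact: sqrtr_ge0. Qed.
Lemma vn_sq v : vnorm v ^+ 2 = x0 v ^+ 2 + x1 v ^+ 2.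
Proof. by rewrite vnE sqr_sqrtr // addr_ge0 // sqr_ge0. Qed.

Lemma sqr_le (a b : R) : 0 <= b -> 0 <= a -> a ^+ 2 <= b ^+ 2 -> a <= b.
Proof. move=> hb ha h; nra. Qed.

Lemma vn_le v b : 0 <= b -> x0 v ^+ 2 + x1 v ^+ 2 <= b ^+ 2 -> vnorm v <= b.
Proof. by move=> hb h; apply: sqr_le => //; [exact: vn_ge0 | rewrite vn_sq]. Qed.

Lemma vn_scale a v : vnorm (a *: v) = `|a| * vnorm v.
Proof.
rewrite !vnE sx0 sx1 !exprMn -mulrDr sqrtrM ?sqr_ge0 //.
by rewrite sqrtr_sqr.
Qed.

Lemma vn_add u v : vnorm (u + v) <= vnorm u + vnorm v.
Proof.
apply: vn_le; first by rewrite addr_ge0 ?vn_ge0.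
rewrite ax0 ax1.
have hu := vn_sq u. have hv := vn_sq v. have gu := vn_ge0 u. have gv := vn_ge0 v.
have cs : x0 u * x0 v + x1 u * x1 v <= vnorm u * vnorm v.
  have h2 : (x0 u * x0 v + x1 u * x1 v) ^+ 2 <= (vnorm u * vnorm v) ^+ 2.
    rewrite exprMn hu hv.
    have := sqr_ge0 (x0 u * x1 v - x1 u * x0 v).
    have -> : (x0 u * x1 v - x1 u * x0 v) ^+ 2 = (x0 u ^+ 2 + x1 u ^+ 2) * (x0 v ^+ 2 + x1 v ^+ 2) - (x0 u * x0 v + x1 u * x1 v) ^+ 2 by ring.
    lra.
  case: (lerP 0 (x0 u * x0 v + x1 u * x1 v)) => h.
    by apply: sqr_le => //; rewrite mulr_ge0.
  apply: le_trans (ltW h) _; by rewrite mulr_ge0.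
nra.
Qed.

Lemma vn_sub u v : vnorm (u - v) <= vnorm u + vnorm v.
Proof.
apply: le_trans (vn_add _ _) _.
by rewrite -scaleN1r vn_scale normrN normr1 mul1r.
Qed.

Lemma vn_x0 v : `|x0 v| <= vnorm v.
Proof. apply: sqr_le; rewrite ?vn_ge0 // vn_sq real_normK ?num_real //; have := sqr_ge0 (x1 v); lra. Qed.
Lemma vn_x1 v : `|x1 v| <= vnorm v.
Proof. apply: sqr_le; rewrite ?vn_ge0 // vn_sq real_normK ?num_real //; have := sqr_ge0 (x0 v); lra. Qed.

Lemma vn_eq0 v : vnorm v = 0 -> v = 0.
Proof.
move=> h; have := vn_sq v; rewrite h expr0n /= => e.
have := sqr_ge0 (x0 v); have := sqr_ge0 (x1 v) => h1 h0.
apply: cv2P; rewrite /x0 /x1 !mxE; apply/eqP; rewrite -sqrf_eq0 ?/x0 ?/x1; apply/eqP; [rewrite /x0 in h0 e|rewrite /x1 in h1 e]; lra.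
Qed.

Lemma vn_pos_l u v : det2 u v != 0 -> 0 < vnorm u.
Proof.
move=> hd; rewrite lt_neqAle vn_ge0 andbT; apply/eqP => h.
move/eqP: hd; apply; rewrite (vn_eq0 (esym h)) /det2 /x0 /x1 !mxE; ring.
Qed.
Lemma vn_pos_r u v : det2 u v != 0 -> 0 < vnorm v.
Proof.
move=> hd; rewrite lt_neqAle vn_ge0 andbT; apply/eqP => h.
move/eqP: hd; apply; rewrite (vn_eq0 (esym h)) /det2 /x0 /x1 !mxE; ring.
Qed.

Lemma det2_le u v : `|det2 u v| <= vnorm u * vnorm v.
Proof.
have hu := vn_sq u. have hv := vn_sq v. have gu := vn_ge0 u. have gv := vn_ge0 v.
apply: sqr_le; rewrite ?mulr_ge0 // real_normK ?num_real // exprMn hu hv /det2.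
have := sqr_ge0 (x0 u * x0 v + x1 u * x1 v).
have -> : (x0 u * x0 v + x1 u * x1 v) ^+ 2 = (x0 u ^+ 2 + x1 u ^+ 2) * (x0 v ^+ 2 + x1 v ^+ 2) - (x0 u * x1 v - x1 u * x0 v) ^+ 2 by ring.
lra.
Qed.

End Lin.

Section Op.
Variable R : realType.
Implicit Types (u v w : 'cV[R]_2) (M N : 'M[R]_2).

Definition e0 : 'cV[R]_2 := mkv 1 0.
Definition e1 : 'cV[R]_2 := mkv 0 1.
Lemma vn_e0 : vnorm e0 = 1.
Proof. by rewrite vnE /e0 mkv0 mkv1 expr1n expr0n /= addr0 sqrtr1. Qed.
Lemma vn_e1 : vnorm e1 = 1.
Proof. by rewrite vnE /e1 mkv0 mkv1 expr1n expr0n /= add0r sqrtr1. Qed.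

Definition opset M := [set vnorm (M *m v) | v in [set v : 'cV[R]_2 | vnorm v = 1]]%classic.

Lemma opset_has_sup M : has_sup (opset M).
Proof.
split; first by exists (vnorm (M *m e0)); exists e0 => //; exact: vn_e0.
exists ((`|M ord0 ord0| + `|M ord0 i1|) + (`|M i1 ord0| + `|M i1 i1|)).
move=> y [v /= hv <-].
have h0 := vn_x0 v. have h1 := vn_x1 v. rewrite hv in h0 h1.
have b0 : `|x0 (M *m v)| <= `|M ord0 ord0| + `|M ord0 i1|.
  rewrite mx0; apply: le_trans (ler_normD _ _) _; rewrite !normrM.
  apply: lerD; rewrite -[X in _ <= X]mulr1; apply: ler_wpM2l => //.
have b1 : `|x1 (M *m v)| <= `|M i1 ord0| + `|M i1 i1|.
  rewrite mx1; apply: le_trans (ler_normD _ _) _; rewrite !normrM.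
  apply: lerD; rewrite -[X in _ <= X]mulr1; apply: ler_wpM2l => //.
apply: vn_le; first by rewrite !addr_ge0.
set a := x0 _ in b0 *; set b := x1 _ in b1 *.
have ga := normr_ge0 a. have gb := normr_ge0 b.
rewrite -(real_normK (num_real a)) -(real_normK (num_real b)).
set r0 := (X in _ <= X) in b0. set r1 := (X in _ <= X) in b1.
have r0g : 0 <= r0 by apply: le_trans b0.
have r1g : 0 <= r1 by apply: le_trans b1.
have q0 : `|a| ^+ 2 <= r0 ^+ 2 by nra.
have q1 : `|b| ^+ 2 <= r1 ^+ 2 by nra.
rewrite -/r0 -/r1. have := mulr_ge0 r0g r1g. nra.
Qed.

Lemma opn_ub M v : vnorm v = 1 -> vnorm (M *m v) <= opnorm M.
Proof. move=> hv; apply: (sup_upper_bound (opset_has_sup M)); by exists v. Qed.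

Lemma opn_ge0 M : 0 <= opnorm M.
Proof. apply: le_trans (opn_ub M vn_e0); exact: vn_ge0. Qed.

Lemma opn_mul M v : vnorm (M *m v) <= opnorm M * vnorm v.
Proof.
have [h|h] := eqVneq (vnorm v) 0.
  by rewrite h mulr0 (vn_eq0 h) mulmx0 vnE /x0 /x1 !mxE expr0n /= addr0 sqrtr0.
have hp : 0 < vnorm v by rewrite lt_neqAle eq_sym h vn_ge0.
have hw : vnorm ((vnorm v)^-1 *: v) = 1.
  by rewrite vn_scale ger0_norm ?invr_ge0 ?vn_ge0 // mulVf.
have := opn_ub M hw; rewrite -scalemxAr vn_scale ger0_norm ?invr_ge0 ?vn_ge0 //.
by rewrite ler_pdivrMl // mulrC.
Qed.

Lemma opn_le M b : 0 <= b -> (forall v, vnorm (M *m v) <= b * vnorm v) -> opnorm M <= b.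
Proof.
move=> hb h; apply: ge_sup; first by exists (vnorm (M *m e0)); exists e0 => //; exact: vn_e0.
by move=> y [v /= hv <-]; have := h v; rewrite hv mulr1.
Qed.

Lemma opn_add M N : opnorm (M + N) <= opnorm M + opnorm N.
Proof.
apply: opn_le; first by rewrite addr_ge0 ?opn_ge0.
move=> v; rewrite mulmxDl mulrDl; apply: le_trans (vn_add _ _) _.
by apply: lerD; apply: opn_mul.
Qed.

Lemma opn_subs M a : opnorm (M - a%:M) <= opnorm M + `|a|.
Proof.
apply: opn_le; first by rewrite addr_ge0 ?opn_ge0.
move=> v; rewrite mulmxBl mul_scalar_mx mulrDl; apply: le_trans (vn_sub _ _) _.
by apply: lerD; [apply: opn_mul | rewrite vn_scale].
Qed.

Lemma opn_eig M u a : M *m u = a *: u -> 0 < vnorm u -> `|a| <= opnorm M.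
Proof. by move=> h hu; have := opn_mul M u; rewrite h vn_scale ler_pM2r. Qed.

Lemma opn_entry M i j : `|M i j| <= opnorm M.
Proof.
have key : forall v, vnorm v = 1 -> `|x0 (M *m v)| <= opnorm M /\ `|x1 (M *m v)| <= opnorm M.
  move=> v hv; split; apply: le_trans (opn_ub M hv); [exact: vn_x0 | exact: vn_x1].
case: (ord2 j) => ->.
  have [k0 k1] := key e0 vn_e0; move: k0 k1; rewrite mx0 mx1 /e0 mkv0 mkv1 !mulr1 !mulr0 !addr0.
  by case: (ord2 i) => ->.
have [k0 k1] := key e1 vn_e1; move: k0 k1; rewrite mx0 mx1 /e1 mkv0 mkv1 !mulr1 !mulr0 !add0r.
by case: (ord2 i) => ->.
Qed.

Lemma opn_two N u v a b : det2 u v != 0 -> N *m u = a *: u -> N *m v = b *: v ->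
  opnorm N <= (`|a| + `|b|) * (vnorm u * vnorm v / `|det2 u v|).
Proof.
move=> hd hu hv.
have hdp : 0 < `|det2 u v| by rewrite normr_gt0.
apply: opn_le; first by rewrite !mulr_ge0 ?addr_ge0 ?vn_ge0 ?invr_ge0.
move=> w.
have e : det2 u v *: (N *m w) = (det2 w v * a) *: u + (det2 u w * b) *: v.
  by rewrite scalemxAr decomp mulmxDr -!scalemxAr hu hv !scalerA.
have := vn_add ((det2 w v * a) *: u) ((det2 u w * b) *: v).
rewrite -e !vn_scale !normrM => h.
have l1 := det2_le w v. have l2 := det2_le u w.
have gu := vn_ge0 u. have gv := vn_ge0 v. have gw := vn_ge0 w.
have ga := normr_ge0 a. have gb := normr_ge0 b.
have hN := vn_ge0 (N *m w).
rewrite -ler_pdivlMl // in h.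
apply: le_trans h _.
have -> : (`|a| + `|b|) * (vnorm u * vnorm v / `|det2 u v|) * vnorm w =
  `|det2 u v|^-1 * ((`|a| + `|b|) * (vnorm u * vnorm v) * vnorm w) by ring.
apply: ler_wpM2l; first by rewrite invr_ge0.
apply: le_trans (_ : `|det2 w v| * `|a| * vnorm u + `|det2 u w| * `|b| * vnorm v <=
   vnorm w * vnorm v * `|a| * vnorm u + vnorm u * vnorm w * `|b| * vnorm v) _.
  apply: lerD; apply: ler_wpM2r => //; apply: ler_wpM2r => //.
rewrite le_eqVlt; apply/orP; left; apply/eqP; ring.
Qed.

Lemma sep_bound M u v a b : det2 u v != 0 -> M *m u = a *: u -> M *m v = b *: v ->
  `|b - a| * (vnorm u * vnorm v) <= `|det2 u v| * (2 * opnorm M).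
Proof.
move=> hd hu hv.
have gu : 0 < vnorm u := vn_pos_l hd.
set up := mkv (- x1 u) (x0 u).
have hup : det2 u up = vnorm u ^+ 2 by rewrite vn_sq /det2 /up mkv0 mkv1; ring.
have vup : vnorm up = vnorm u by rewrite !vnE /up mkv0 mkv1; congr Num.sqrt; ring.
set N := M - a%:M.
have Nu : N *m u = 0 by rewrite mulmxBl mul_scalar_mx hu subrr.
have Nv : N *m v = (b - a) *: v by rewrite mulmxBl mul_scalar_mx hv scalerBl.
have e := decomp u up v.
have e2 : (vnorm u ^+ 2 * (b - a)) *: v = det2 u v *: (N *m up).
  have := congr1 (mulmx N) e.
  rewrite mulmxDr -!scalemxAr Nu Nv scaler0 add0r hup scalerA => ->.
  by [].
have := congr1 (@vnorm R) e2; rewrite !vn_scale normrM => e3.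
have b1 := opn_mul N up. rewrite vup in b1.
have b2 := opn_subs M a. have b3 := opn_eig hu gu.
have gN := vn_ge0 (N *m up). have gv := vn_ge0 v.
have gd := normr_ge0 (det2 u v).
have ha2 : `|vnorm u ^+ 2| = vnorm u ^+ 2 by rewrite ger0_norm // sqr_ge0.
rewrite ha2 in e3.
have : vnorm u * (`|b - a| * (vnorm u * vnorm v)) <= vnorm u * (`|det2 u v| * (2 * opnorm M)).
  have -> : vnorm u * (`|b - a| * (vnorm u * vnorm v)) = `|det2 u v| * vnorm (N *m up) by rewrite -e3; ring.
  have : vnorm (N *m up) <= 2 * opnorm M * vnorm u.
    apply: le_trans b1 _; apply: ler_wpM2r; first exact: vn_ge0. lra.
  move=> h; rewrite mulrCA; apply: ler_wpM2l => //; lra.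
by rewrite ler_pM2l.
Qed.

Lemma vieta M u v a b : det2 u v != 0 -> M *m u = a *: u -> M *m v = b *: v ->
  a * b = \det M /\ a + b = \tr M.
Proof.
move=> hd hu hv; split.
  have := det2M M u v; rewrite hu hv det2Zl det2Zr mulrA => /eqP.
  by rewrite -subr_eq0 -mulrBl mulf_eq0 (negbTE hd) orbF subr_eq0 => /eqP.
have := tr2M M u v; rewrite hu hv det2Zl det2Zr -mulrDl => /eqP.
by rewrite -subr_eq0 -mulrBl mulf_eq0 (negbTE hd) orbF subr_eq0 => /eqP.
Qed.

End Op.

Section Coc.
Variable R : realType.
Variable k : nat.
Implicit Types (u v w : 'cV[R]_2) (M N : 'M[R]_2) (D A : 'I_k -> 'M[R]_2).

Lemma le_bigmax0 (F : 'I_k -> R) j : F j <= \big[Order.max/0]_(i < k) F i.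
Proof.
have : j \in index_enum 'I_k by rewrite mem_index_enum.
elim: (index_enum 'I_k) => [//|i s IH]; rewrite in_cons big_cons.
case/orP => [/eqP <-|/IH h]; rewrite le_max ?lexx //.
by rewrite h orbT.
Qed.

Lemma cdist_le D A j : opnorm (D j - A j) <= cdist D A.
Proof. exact: (le_bigmax0 (fun j => opnorm (D j - A j))). Qed.

Record ddata D := DData {
  du : 'cV[R]_2; dv : 'cV[R]_2; dal : 'I_k -> R; dbe : 'I_k -> R;
  dd_det : det2 du dv != 0;
  dd_u : forall j, D j *m du = dal j *: du;
  dd_v : forall j, D j *m dv = dbe j *: dv;
  dd_ab : forall j, `|dal j * dbe j| = 1 }.

Lemma Diag_data D : Diag D -> exists dd : ddata D, True.
Proof.
case=> hc [u [v [hd hl]]].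
rewrite rowmx_det in hd.
have [al hal] := choice (fun j => proj1 (hl j)).
have [be hbe] := choice (fun j => proj2 (hl j)).
have hab : forall j, `|al j * be j| = 1.
  move=> j; have [-> _] := vieta hd (hal j) (hbe j).
  by case: (hc j) => ->; rewrite ?normrN normr1.
by exists (DData hd hal hbe hab).
Qed.

Lemma cprod_eig D u (al : 'I_k -> R) (w : seq 'I_k) :
  (forall j, D j *m u = al j *: u) -> cprod D w *m u = (\prod_(i <- w) al i) *: u.
Proof.
move=> h; rewrite /cprod.
suff : forall M c, M *m u = c *: u ->
   foldl (fun M j => D j *m M) M w *m u = (c * \prod_(i <- w) al i) *: u.
  by move=> /(_ 1%:M 1); rewrite mul1mx scale1r mul1r; apply.
elim: w => [|j w IH] M c hM /=; first by rewrite big_nil mulr1.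
rewrite big_cons mulrA; apply: IH.
by rewrite -mulmxA hM -scalemxAr h scalerA mulrC.
Qed.

Definition Xf (al : 'I_k -> R) j := ln `|al j|.
Definition Ssum (x : 'I_k -> R) (w : seq 'I_k) := \sum_(i <- w) x i.

Lemma prod_expR (al : 'I_k -> R) (w : seq 'I_k) : (forall j, al j != 0) ->
  `|\prod_(i <- w) al i| = expR (Ssum (Xf al) w).
Proof.
move=> h; rewrite normr_prod /Ssum; elim: w => [|j w IH].
  by rewrite !big_nil expR0.
by rewrite !big_cons IH expRD /Xf lnK // posrE normr_gt0.
Qed.

Lemma prod_expRN (al be : 'I_k -> R) (w : seq 'I_k) : (forall j, `|al j * be j| = 1) ->
  (forall j, al j != 0) ->
  `|\prod_(i <- w) be i| = expR (- Ssum (Xf al) w).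
Proof.
move=> hab al0.
  rewrite normr_prod /Ssum; elim: w => [|j w IH]; first by rewrite !big_nil oppr0 expR0.
  rewrite !big_cons IH opprD expRD /Xf [expR (- ln _)]expRN lnK ?posrE ?normr_gt0 //.
  congr (_ * _); have := hab j; rewrite normrM => e.
  by rewrite -[RHS]mulr1 -e mulKf // normr_eq0.
Qed.

Lemma F_bounds D (dd : ddata D) (w : seq 'I_k) :
  let S := Ssum (Xf (dal dd)) w in
  let K := vnorm (du dd) * vnorm (dv dd) / `|det2 (du dd) (dv dd)| in
  `|S| <= ln (opnorm (cprod D w)) /\ ln (opnorm (cprod D w)) <= `|S| + ln (2 * K).
Proof.
move=> S K.
case: dd @S @K => u v al be hd hu hv hab S K /=.
have al0 : forall j, al j != 0.
  by move=> j; apply/eqP => h; have := hab j; rewrite h mul0r normr0 => /eqP; rewrite eq_sym oner_eq0.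
have be0 : forall j, be j != 0.
  by move=> j; apply/eqP => h; have := hab j; rewrite h mulr0 normr0 => /eqP; rewrite eq_sym oner_eq0.
have ha := prod_expR w al0.
have hb := prod_expRN w hab al0.
have Hu := cprod_eig w hu. have Hv := cprod_eig w hv.
have gu := vn_pos_l hd. have gv := vn_pos_r hd.
have la := opn_eig Hu gu. have lb := opn_eig Hv gv.
rewrite ha in la; rewrite hb in lb.
have lo : expR `|S| <= opnorm (cprod D w).
  by case: (ler0P S) => _.
have opos : 0 < opnorm (cprod D w) by apply: lt_le_trans lo; exact: expR_gt0.
have Kp : 0 < K by rewrite /K !mulr_gt0 // invr_gt0 normr_gt0.
split.
  by rewrite -[`|S|]expRK ler_ln ?posrE ?expR_gt0.
have up := opn_two hd Hu Hv. rewrite ha hb -/K -/S in up.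
have up2 : opnorm (cprod D w) <= (2 * K) * expR `|S|.
  apply: le_trans up _.
  have -> : 2 * K * expR `|S| = (expR `|S| + expR `|S|) * K by ring.
  apply: ler_wpM2r; first exact: ltW.
  apply: lerD.
    by rewrite ler_expR; exact: ler_norm.
  by rewrite ler_expR -normrN; exact: ler_norm.
have K2 : 0 < 2 * K by rewrite mulr_gt0.
have e2 : 0 < expR `|S| := expR_gt0 _.
have K3 : 0 < 2 * K * expR `|S| by rewrite mulr_gt0.
rewrite -ler_ln ?posrE // in up2.
by rewrite lnM ?posrE // expRK addrC in up2.
Qed.

End Coc.

Section Near.
Variable R : realType.
Variable k : nat.
Implicit Types (u v w : 'cV[R]_2) (M N : 'M[R]_2) (D A : 'I_k -> 'M[R]_2).

Lemma absM_le (x y a d : R) : `|x| <= a -> `|y| <= d -> - (a * d) <= x * y <= a * d.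
Proof.
move=> hx hy; rewrite -ler_norml normrM; apply: ler_pM => //.
Qed.

Lemma det_close (M E : 'M[R]_2) (a d : R) : (forall i j, `|M i j| <= a) -> (forall i j, `|E i j| <= d) ->
  d <= 1 -> `|\det (M + E) - \det M| <= d * (4 * a + 2).
Proof.
move=> hM hE hd.
have ha : 0 <= a by apply: le_trans (hM ord0 ord0).
have hd0 : 0 <= d by apply: le_trans (hE ord0 ord0).
rewrite !det22 !mxE.
have := absM_le (hM ord0 ord0) (hE i1 i1).
have := absM_le (hE ord0 ord0) (hM i1 i1).
have := absM_le (hE ord0 ord0) (hE i1 i1).
have := absM_le (hM ord0 i1) (hE i1 ord0).
have := absM_le (hE ord0 i1) (hM i1 ord0).
have := absM_le (hE ord0 i1) (hE i1 ord0).
move=> /andP[p1 q1] /andP[p2 q2] /andP[p3 q3] /andP[p4 q4] /andP[p5 q5] /andP[p6 q6].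
have dd : d * d <= d by rewrite -[X in _ <= X]mulr1; apply: ler_wpM2l.
rewrite ler_norml; apply/andP; split; lra.
Qed.

Lemma sq_sep (x h : R) : 0 < h -> h <= x ^+ 2 -> h / (1 + h) <= `|x|.
Proof.
move=> hh hx.
have hp : 0 < 1 + h by lra.
rewrite ler_pdivrMr //.
rewrite -(real_normK (num_real x)) in hx.
have := normr_ge0 x. nra.
Qed.

Lemma mul_inv_le1 (X Dn : R) : 0 < Dn -> X <= Dn -> X * Dn^-1 <= 1.
Proof. by move=> h1 h2; rewrite ler_pdivrMr // mul1r. Qed.

Lemma near_A A (ddA : ddata A) j0 : Diag A -> `|dal ddA j0| != 1 ->
  exists delta K0 B : R, [/\ 0 < delta, delta <= 1, 0 < K0, 0 <= B &
    forall D, Diag D -> cdist D A < delta -> forall dd : ddata D,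
      vnorm (du dd) * vnorm (dv dd) / `|det2 (du dd) (dv dd)| <= K0 /\
      (forall j, `|Xf (dal dd) j| <= B)].
Proof.
move=> [hcA _] hj0.
set Am := \sum_(j < k) opnorm (A j).
have AmA : forall j, opnorm (A j) <= Am.
  move=> j; rewrite /Am (bigD1 j) //= lerDl sumr_ge0 // => i _; exact: opn_ge0.
have Am0 : 0 <= Am by rewrite sumr_ge0 // => i _; exact: opn_ge0.
set al := dal ddA j0. set be := dbe ddA j0.
have [vd vt] := vieta (dd_det ddA) (dd_u ddA j0) (dd_v ddA j0).
rewrite -/al -/be in vd vt.
have hab : `|al * be| = 1 by apply: dd_ab.
have neq : al != be.
  apply/eqP => e; move: hab; rewrite e normrM => h.
  move/eqP: hj0; apply; rewrite -/al e.
  have := normr_ge0 be. nra.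
set g := (be - al) ^+ 2.
have gp : 0 < g by rewrite /g lt_neqAle sqr_ge0 andbT eq_sym sqrf_eq0 subr_eq0 eq_sym.
set a := opnorm (A j0).
have a0 : 0 <= a := opn_ge0 _.
set delta := (3 + 4 * a + 16 * a / g)^-1.
have den : 3 <= 3 + 4 * a + 16 * a / g.
  have : 0 <= 16 * a / g by apply: divr_ge0; [apply: mulr_ge0 | exact: ltW].
  lra.
have dp : 0 < delta by rewrite invr_gt0; lra.
have d1 : delta <= 1 by rewrite /delta invf_le1; lra.
have denp : 0 < 3 + 4 * a + 16 * a / g by lra.
have q16 : 0 <= 16 * a / g by apply: divr_ge0; [apply: mulr_ge0 | exact: ltW].
have hd_det : delta * (4 * a + 2) < 2.
  have : (4 * a + 2) * delta <= 1 by rewrite /delta mul_inv_le1 //; lra.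
  lra.
have hd_g : 16 * a * delta <= g.
  have hq : 16 * a / g * delta <= 1 by rewrite /delta mul_inv_le1 //; lra.
  have -> : 16 * a * delta = g * (16 * a / g * delta) by field; rewrite gt_eqF.
  have := ltW gp. nra.
set h := g / 2.
have hp : 0 < h by rewrite /h divr_gt0.
set g1 := h / (1 + h).
have g1p : 0 < g1 by rewrite /g1 divr_gt0 //; lra.
exists delta, (2 * (a + 1) / g1), (ln (Am + 1)).
split => //.
- by rewrite divr_gt0 // mulr_gt0 //; lra.
- by apply: ln_ge0; lra.
move=> D [hcD _] hdist dd.
have Dj : forall j, opnorm (D j) <= opnorm (A j) + delta.
  move=> j; have -> : D j = A j + (D j - A j) by rewrite addrC subrK.
  apply: le_trans (opn_add _ _) _; apply: lerD => //.
  by apply: ltW; apply: le_lt_trans (cdist_le D A j) hdist.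
have Ej : forall j i l, `|(D j - A j) i l| <= delta.
  move=> j i l; apply: le_trans (opn_entry _ _ _) _.
  by apply: ltW; apply: le_lt_trans (cdist_le D A j) hdist.
split; last first.
  move=> j.
  have ab := dd_ab dd j.
  have gu := vn_pos_l (dd_det dd). have gv := vn_pos_r (dd_det dd).
  have la := opn_eig (dd_u dd j) gu. have lb := opn_eig (dd_v dd j) gv.
  have lD : opnorm (D j) <= Am + 1 by apply: le_trans (Dj j) _; apply: lerD.
  set x := dal dd j in ab la *. set y := dbe dd j in ab lb *.
  rewrite normrM in ab.
  have x0 : 0 < `|x| by rewrite lt_neqAle normr_ge0 andbT; apply/eqP => e; move: ab; rewrite -e mul0r => /eqP; rewrite eq_sym oner_eq0.
  have A1 : 0 < Am + 1 by lra.
  rewrite /Xf -/x ler_norml; apply/andP; split.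
    rewrite -lnV ?posrE // ler_ln ?posrE ?invr_gt0 //.
    rewrite -[_^-1]mul1r ler_pdivrMr //.
    have := normr_ge0 y. nra.
  by rewrite ler_ln ?posrE //; lra.
set al' := dal dd j0. set be' := dbe dd j0.
have [vd' vt'] := vieta (dd_det dd) (dd_u dd j0) (dd_v dd j0).
rewrite -/al' -/be' in vd' vt'.
have detE : \det (D j0) = \det (A j0).
  have := det_close (fun i l => opn_entry (A j0) i l) (Ej j0) d1.
  rewrite [A j0 + _]addrC subrK => hc.
  have hc2 : `|\det (D j0) - \det (A j0)| < 2 by apply: le_lt_trans hc _.
  case: (hcD j0) hc2 => ->; case: (hcA j0) => -> //.
    by rewrite opprK ger0_norm ?ltxx //; lra.
  by rewrite ler0_norm ?opprB ?ltxx //; lra.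
have trc : `|\tr (D j0) - \tr (A j0)| <= 2 * delta.
  rewrite !tr22.
  have e1 := Ej j0 ord0 ord0. have e2 := Ej j0 i1 i1. rewrite !mxE in e1 e2.
  apply: le_trans (_ : `|D j0 ord0 ord0 - A j0 ord0 ord0| + `|D j0 i1 i1 - A j0 i1 i1| <= _).
    have -> : D j0 ord0 ord0 + D j0 i1 i1 - (A j0 ord0 ord0 + A j0 i1 i1) =
      (D j0 ord0 ord0 - A j0 ord0 ord0) + (D j0 i1 i1 - A j0 i1 i1) by ring.
    exact: ler_normD.
  lra.
have trA : `|\tr (A j0)| <= 2 * a.
  rewrite tr22; apply: le_trans (ler_normD _ _) _.
  have := opn_entry (A j0) ord0 ord0. have := opn_entry (A j0) i1 i1. rewrite -/a. lra.
have gE : g = \tr (A j0) ^+ 2 - 4 * \det (A j0) by rewrite /g -vt -vd; ring.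
have sepE : (be' - al') ^+ 2 = \tr (D j0) ^+ 2 - 4 * \det (A j0) by rewrite -detE -vt' -vd'; ring.
have sep2 : h <= (be' - al') ^+ 2.
  rewrite sepE.
  set t := \tr (A j0) in trc trA gE. set t' := \tr (D j0) in trc sepE *.
  move: trc trA; rewrite !ler_norml => /andP[c1 c2] /andP[c3 c4].
  have : - (2 * a * (2 * delta)) <= t * (t' - t).
    have := absM_le (x:=t) (y:=t'-t) (a:=2*a) (d:=2*delta).
    by rewrite !ler_norml c1 c2 c3 c4 => /(_ isT isT) /andP[].
  have := sqr_ge0 (t' - t).
  rewrite /h gE. move: hd_g. nra.
have sep := sq_sep hp sep2. rewrite -/g1 in sep.
have sb := sep_bound (dd_det dd) (dd_u dd j0) (dd_v dd j0). rewrite -/al' -/be' in sb.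
have lD : opnorm (D j0) <= a + 1 by apply: le_trans (Dj j0) _; rewrite -/a; lra.
have gu := vn_pos_l (dd_det dd). have gv := vn_pos_r (dd_det dd).
have dp' : 0 < `|det2 (du dd) (dv dd)| by rewrite normr_gt0 (dd_det dd).
set P := vnorm (du dd) * vnorm (dv dd) in sb *.
have Pp : 0 < P by rewrite mulr_gt0.
rewrite ler_pdivrMr // mulrAC ler_pdivlMr //.
set dn := `|det2 (du dd) (dv dd)| in dp' sb *.
set z := `|be' - al'| in sep sb *.
have h1 : P * g1 <= P * z by apply: ler_wpM2l; [exact: ltW|].
have h2 : dn * (2 * opnorm (D j0)) <= dn * (2 * (a + 1)) by apply: ler_wpM2l; [exact: ltW| lra].
lra.
Qed.

End Near.

Section Prob.
Variable R : realType.
Variable k : nat.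
Variable p : 'I_k -> R.
Hypothesis hp : forall i, 0 < p i.
Hypothesis hsum : \sum_(i < k) p i = 1.

Lemma sum_tupleS n (F : n.+1.-tuple 'I_k -> R) :
  \sum_(w : n.+1.-tuple 'I_k) F w = \sum_(j : 'I_k) \sum_(w : n.-tuple 'I_k) F [tuple of j :: w].
Proof.
rewrite pair_big /=.
rewrite (reindex (fun q : 'I_k * n.-tuple 'I_k => [tuple of q.1 :: q.2])) /=; first by [].
exists (fun t : n.+1.-tuple 'I_k => (thead t, [tuple of behead t])).
  move=> [j w] _ /=; rewrite theadE; congr pair; exact: val_inj.
by move=> t _ /=; rewrite -tuple_eta.
Qed.

Lemma wprob_cons j (w : seq 'I_k) : wprob p (j :: w) = p j * wprob p w.
Proof. by rewrite /wprob big_cons. Qed.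

Lemma wprob_ge0 (w : seq 'I_k) : 0 <= wprob p w.
Proof. rewrite /wprob; elim: w => [|j w IH]; rewrite ?big_nil ?big_cons //; by rewrite mulr_ge0 // ltW. Qed.

Lemma En_S n (f : n.+1.-tuple 'I_k -> R) :
  En p f = \sum_(j : 'I_k) p j * En p (fun w : n.-tuple 'I_k => f [tuple of j :: w]).
Proof.
rewrite /En sum_tupleS; apply: eq_bigr => j _.
rewrite mulr_sumr; apply: eq_bigr => w _.
by rewrite /= wprob_cons mulrA.
Qed.

Lemma En_0 (f : 0.-tuple 'I_k -> R) : En p f = f [tuple].
Proof.
rewrite /En (big_pred1 [tuple]) /=; last by move=> t; symmetry; apply/eqP; exact: tuple0.
by rewrite /wprob big_nil mul1r.
Qed.

Lemma En_ext n (f g : n.-tuple 'I_k -> R) : (forall w, f w = g w) -> En p f = En p g.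
Proof. by move=> h; apply: eq_bigr => w _; rewrite h. Qed.

Lemma En_le n (f g : n.-tuple 'I_k -> R) : (forall w, f w <= g w) -> En p f <= En p g.
Proof. by move=> h; apply: ler_sum => w _; apply: ler_wpM2l; [exact: wprob_ge0|]. Qed.

Lemma En_add n (f g : n.-tuple 'I_k -> R) : En p (fun w => f w + g w) = En p f + En p g.
Proof. by rewrite /En -big_split; apply: eq_bigr => w _; rewrite mulrDr. Qed.

Lemma En_scale n c (f : n.-tuple 'I_k -> R) : En p (fun w => c * f w) = c * En p f.
Proof. by rewrite /En mulr_sumr; apply: eq_bigr => w _; rewrite mulrCA. Qed.

Lemma En_const n c : En p (fun _ : n.-tuple 'I_k => c) = c.
Proof.
elim: n => [|n IH]; first by rewrite En_0.
rewrite En_S (eq_bigr (fun j => p j * c)); last by move=> j _; rewrite IH.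
by rewrite -mulr_suml hsum mul1r.
Qed.

Lemma En_sub n (f g : n.-tuple 'I_k -> R) : En p (fun w => f w - g w) = En p f - En p g.
Proof.
rewrite (En_ext (g := fun w => f w + (-1) * g w)); last by move=> w; rewrite mulN1r.
by rewrite En_add En_scale mulN1r.
Qed.

Lemma Pn_En n (E : n.-tuple 'I_k -> bool) : Pn p E = En p (fun w => (E w)%:R).
Proof.
rewrite /Pn /En big_mkcond; apply: eq_bigr => w _.
by case: (E w); rewrite ?mulr1 ?mulr0.
Qed.

Lemma Pn_le n (E E' : n.-tuple 'I_k -> bool) : (forall w, E w -> E' w) -> Pn p E <= Pn p E'.
Proof.
move=> h; rewrite !Pn_En; apply: En_le => w.
by case: (boolP (E w)) => [/h ->|_] //=; case: (E' w).
Qed.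

Lemma Pn_compl n (E : n.-tuple 'I_k -> bool) : Pn p (fun w => ~~ E w) = 1 - Pn p E.
Proof.
rewrite !Pn_En -[X in X - _](En_const n 1) -En_sub; apply: En_ext => w.
by case: (E w) => /=; lra.
Qed.

Lemma Pn_union n (E E' : n.-tuple 'I_k -> bool) : Pn p (fun w => E w || E' w) <= Pn p E + Pn p E'.
Proof.
rewrite !Pn_En -En_add; apply: En_le => w.
by case: (E w); case: (E' w) => /=; lra.
Qed.

Lemma Pn_ge0 n (E : n.-tuple 'I_k -> bool) : 0 <= Pn p E.
Proof. by apply: sumr_ge0 => w _; exact: wprob_ge0. Qed.

Lemma Pn_le1 n (E : n.-tuple 'I_k -> bool) : Pn p E <= 1.
Proof.
rewrite Pn_En -[X in _ <= X](En_const n 1); apply: En_le => w.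
by case: (E w) => /=; lra.
Qed.

Lemma Ssum_cons (x : 'I_k -> R) j (w : seq 'I_k) : Ssum x (j :: w) = x j + Ssum x w.
Proof. by rewrite /Ssum big_cons. Qed.

Lemma Ssum_bound (x : 'I_k -> R) W n (w : n.-tuple 'I_k) : (forall j, `|x j| <= W) ->
  `|Ssum x w| <= n%:R * W.
Proof.
move=> h; case: w => s /= /eqP <-.
elim: s => [|j s IH]; first by rewrite /Ssum big_nil normr0 mul0r.
rewrite Ssum_cons /= -addn1 natrD mulrDl mul1r addrC.
by apply: le_trans (ler_normD _ _) _; apply: lerD.
Qed.

Lemma En_mean0 (x : 'I_k -> R) n : \sum_j p j * x j = 0 ->
  En p (fun w : n.-tuple 'I_k => Ssum x w) = 0.
Proof.
move=> h; elim: n => [|n IH]; first by rewrite En_0 /Ssum big_nil.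
rewrite En_S (eq_bigr (fun j => p j * x j)) ?h //.
move=> j _; rewrite (En_ext (g := fun w => x j + Ssum x w)); last by move=> w; exact: Ssum_cons.
by rewrite En_add En_const IH addr0.
Qed.

Lemma En_sq (x : 'I_k -> R) n : \sum_j p j * x j = 0 ->
  En p (fun w : n.-tuple 'I_k => Ssum x w ^+ 2) = n%:R * \sum_j p j * x j ^+ 2.
Proof.
move=> h; elim: n => [|n IH]; first by rewrite En_0 /Ssum big_nil expr0n mul0r.
set s2 := \sum_j p j * x j ^+ 2 in IH *.
rewrite En_S (eq_bigr (fun j => p j * x j ^+ 2 + p j * (n%:R * s2))).
  by rewrite big_split /= -mulr_suml hsum mul1r -/s2 -natr1; ring.
move=> j _.
rewrite (En_ext (g := fun w => x j ^+ 2 + (Ssum x w ^+ 2 + (2 * x j) * Ssum x w))); last first.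
  by move=> w; rewrite Ssum_cons; ring.
rewrite !En_add En_const IH En_scale En_mean0 //.
ring.
Qed.

Lemma En_mgf (x : 'I_k -> R) (l : R) n :
  En p (fun w : n.-tuple 'I_k => expR (l * Ssum x w)) = (\sum_j p j * expR (l * x j)) ^+ n.
Proof.
elim: n => [|n IH]; first by rewrite En_0 /Ssum big_nil mulr0 expR0 expr0.
rewrite En_S exprS mulr_suml; apply: eq_bigr => j _.
rewrite (En_ext (g := fun w => expR (l * x j) * expR (l * Ssum x w))); last first.
  by move=> w; rewrite Ssum_cons mulrDr expRD.
by rewrite En_scale IH mulrA.
Qed.

End Prob.

Section Conc.
Variable R : realType.
Variable k : nat.
Variable p : 'I_k -> R.
Hypothesis hp : forall i, 0 < p i.
Hypothesis hsum : \sum_(i < k) p i = 1.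

Lemma expR_quad (z : R) : `|z| <= 1/2 -> expR z <= 1 + z + 2 * z ^+ 2.
Proof.
rewrite ler_norml => /andP[h1 h2].
have e1 := expR_ge1Dx (- z).
have e2 : expR z * expR (- z) = 1 by rewrite expRN mulfV // gt_eqF // expR_gt0.
have e3 := expR_gt0 z.
have : expR z * (1 - z) <= 1 by rewrite -e2; apply: ler_wpM2l; [exact: ltW|lra].
have : 1 <= (1 + z + 2 * z ^+ 2) * (1 - z).
  have -> : (1 + z + 2 * z ^+ 2) * (1 - z) = 1 + z ^+ 2 * (1 - 2 * z) by ring.
  have : 0 <= z ^+ 2 * (1 - 2 * z) by rewrite mulr_ge0 ?sqr_ge0 //; lra.
  lra.
move=> a b; nra.
Qed.

Lemma mgf_bound (x : 'I_k -> R) W l : \sum_j p j * x j = 0 -> (forall j, `|x j| <= W) ->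
  0 <= l -> l * W <= 1/2 ->
  \sum_j p j * expR (l * x j) <= expR (2 * l ^+ 2 * W ^+ 2).
Proof.
move=> h0 hW l0 lW.
apply: le_trans (_ : \sum_j p j * (1 + l * x j + 2 * (l ^+ 2 * W ^+ 2)) <= _).
  apply: ler_sum => j _; apply: ler_wpM2l; first exact: ltW.
  apply: le_trans (expR_quad _) _.
    rewrite normrM ger0_norm //; apply: le_trans lW; apply: ler_wpM2l => //.
  rewrite lerD2l exprMn; apply: ler_wpM2l => //; apply: ler_wpM2l; first exact: sqr_ge0.
  have := hW j; have := normr_ge0 (x j); rewrite -(real_normK (num_real (x j))). nra.
rewrite (eq_bigr (fun j => p j + l * (p j * x j) + p j * (2 * (l ^+ 2 * W ^+ 2)))); last first.
  by move=> j _; ring.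
rewrite !big_split /= -mulr_sumr h0 mulr0 addr0 -mulr_suml hsum mul1r.
apply: le_trans (expR_ge1Dx _); rewrite mulrA; lra.
Qed.

Lemma chernoff (x : 'I_k -> R) W n y : \sum_j p j * x j = 0 -> (forall j, `|x j| <= W) ->
  0 < W -> (0 < n)%N -> 0 < y ->
  Pn p (fun w : n.-tuple 'I_k => y < Ssum x w) <= expR (- (y ^+ 2 / (8 * n%:R * W ^+ 2))).
Proof.
move=> h0 hW W0 n0 y0.
have nR : 0 < n%:R :> R by rewrite ltr0n.
case: (lerP y (n%:R * W)) => hy; last first.
  apply: le_trans (_ : Pn p (fun _ : n.-tuple 'I_k => false) <= _).
    apply: (Pn_le hp) => w h; have := Ssum_bound w hW; rewrite ler_norml => /andP[_ b]; lra.
  by rewrite /Pn big_pred0 // ltW // expR_gt0.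
set l := y / (4 * n%:R * W ^+ 2).
have l0 : 0 <= l by rewrite /l divr_ge0 // ?ltW // mulr_gt0 // ?mulr_gt0 // exprn_gt0.
have lW : l * W <= 1/2.
  rewrite /l.
  have -> : y / (4 * n%:R * W ^+ 2) * W = (y / (n%:R * W)) / 4 by field; rewrite ?gt_eqF.
  have : y / (n%:R * W) <= 1 by rewrite ler_pdivrMr ?mul1r // mulr_gt0.
  lra.
apply: le_trans (_ : En p (fun w : n.-tuple 'I_k => expR (- (l * y)) * expR (l * Ssum x w)) <= _).
  rewrite Pn_En; apply: (En_le hp) => w.
  rewrite -expRD.
  case: (boolP (y < Ssum x w)) => h /=; last exact: ltW (expR_gt0 _).
  rewrite -expR0 ler_expR; have : 0 <= l * (Ssum x w - y) by rewrite mulr_ge0 //; lra.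
  lra.
rewrite En_scale En_mgf.
apply: le_trans (_ : expR (- (l * y)) * expR (2 * l ^+ 2 * W ^+ 2) ^+ n <= _).
  apply: ler_wpM2l; first exact: ltW (expR_gt0 _).
  apply: lerXn2r.
  - rewrite nnegrE; apply: sumr_ge0 => j _; apply: mulr_ge0; [exact: ltW | exact: expR_ge0].
  - by rewrite nnegrE expR_ge0.
  - exact: mgf_bound.
rewrite -expRM_natl -expRD ler_expR /l.
rewrite le_eqVlt; apply/orP; left; apply/eqP.
field.
by rewrite !gt_eqF // ?exprn_gt0.
Qed.

Lemma Ssum_opp (x : 'I_k -> R) (w : seq 'I_k) : Ssum (fun j => - x j) w = - Ssum x w.
Proof. by rewrite /Ssum sumrN. Qed.

Lemma tail2 (x : 'I_k -> R) W n y : \sum_j p j * x j = 0 -> (forall j, `|x j| <= W) ->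
  0 < W -> (0 < n)%N -> 0 < y ->
  Pn p (fun w : n.-tuple 'I_k => y < `|Ssum x w|) <= 2 * expR (- (y ^+ 2 / (8 * n%:R * W ^+ 2))).
Proof.
move=> h0 hW W0 n0 y0.
apply: le_trans (_ : Pn p (fun w : n.-tuple 'I_k => (y < Ssum x w) || (y < Ssum (fun j => - x j) w)) <= _).
  by apply: (Pn_le hp) => w; rewrite Ssum_opp ltr_normr.
apply: le_trans (Pn_union hp _ _) _.
rewrite mulr2n mulrDl mul1r; apply: lerD; first exact: chernoff.
apply: chernoff => //.
  by rewrite (eq_bigr (fun j => - (p j * x j))) ?sumrN ?h0 ?oppr0 // => j _; rewrite mulrN.
by move=> j; rewrite normrN.
Qed.

Definition ind (c : bool) : R := c%:R.

Definition clamp (a b z : R) := if z < a then a else if b < z then b else z.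

Lemma clamp_shift (a b x z : R) : clamp a b (x + z) = x + clamp (a - x) (b - x) z.
Proof.
rewrite /clamp.
have -> : (x + z < a) = (z < a - x) by apply/idP/idP => h; lra.
have -> : (b < x + z) = (b - x < z) by apply/idP/idP => h; lra.
by case: ifP => _; [ring|case: ifP => _; ring].
Qed.

Lemma stein_pt (a b W x z : R) : a <= b -> `|x| <= W ->
  x * (clamp a b (x + z) - clamp a b z) <= W ^+ 2 * ind (a - W <= x + z <= b + W).
Proof.
rewrite ler_norml /clamp => ab /andP[xl xu].
have W0 : 0 <= W by lra.
case: (lerP (a - W) (x + z)) => w1; case: (lerP (x + z) (b + W)) => w2 /=;
case: (ltP (x + z) a) => h1; case: (ltP b (x + z)) => h2;
case: (ltP z a) => h3; case: (ltP b z) => h4; rewrite /ind ?mulr1 ?mulr0; nra.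
Qed.

End Conc.
Arguments ind {R} c.

Section Conc2.
Variable R : realType.
Variable k : nat.
Variable p : 'I_k -> R.
Hypothesis hp : forall i, 0 < p i.
Hypothesis hsum : \sum_(i < k) p i = 1.

Lemma stein (x : 'I_k -> R) W : \sum_j p j * x j = 0 -> (forall j, `|x j| <= W) ->
  forall n a b, a <= b ->
  En p (fun w : n.-tuple 'I_k => Ssum x w * clamp a b (Ssum x w)) <=
  n%:R * W ^+ 2 * Pn p (fun w : n.-tuple 'I_k => a - W <= Ssum x w <= b + W).
Proof.
move=> h0 hW; elim => [|n IH] a b ab.
  by rewrite En_0 /Ssum big_nil mul0r !mul0r.
rewrite En_S Pn_En En_S mulr_sumr.
have key : forall j, En p (fun w : n.-tuple 'I_k => Ssum x [tuple of j :: w] * clamp a b (Ssum x [tuple of j :: w]))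
   <= x j * En p (fun w : n.-tuple 'I_k => clamp a b (Ssum x w)) +
      n.+1%:R * W ^+ 2 * En p (fun w : n.-tuple 'I_k => ind (a - W <= Ssum x [tuple of j :: w] <= b + W)).
  move=> j.
  rewrite (En_ext p (g := fun w => x j * (clamp a b (x j + Ssum x w) - clamp a b (Ssum x w))
       + x j * clamp a b (Ssum x w) + (x j * Ssum x w +
         Ssum x w * clamp (a - x j) (b - x j) (Ssum x w)))); last first.
    by move=> w; rewrite /= Ssum_cons -/(Ssum x w) clamp_shift; ring.
  rewrite !En_add !En_scale (En_mean0 hsum) // mulr0 add0r.
  have i1 := IH (a - x j) (b - x j) ltac:(lra).
  have e1 : Pn p (fun w : n.-tuple 'I_k => a - x j - W <= Ssum x w <= b - x j + W) =
      En p (fun w : n.-tuple 'I_k => ind (a - W <= Ssum x [tuple of j :: w] <= b + W)).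
    rewrite Pn_En; apply: En_ext => w; rewrite /= Ssum_cons -/(Ssum x w) /ind.
    have -> : (a - W <= x j + Ssum x w <= b + W) = (a - x j - W <= Ssum x w <= b - x j + W).
      by apply/idP/idP => /andP[u1 u2]; apply/andP; split; lra.
    by [].
  rewrite e1 in i1.
  have i2 : x j * En p (fun w : n.-tuple 'I_k => clamp a b (x j + Ssum x w) - clamp a b (Ssum x w))
      <= W ^+ 2 * En p (fun w : n.-tuple 'I_k => ind (a - W <= Ssum x [tuple of j :: w] <= b + W)).
    rewrite -En_scale -[X in _ <= X]En_scale; apply: (En_le hp) => w; rewrite /= Ssum_cons -/(Ssum x w).
    exact: stein_pt.
  rewrite -natr1 mulrDl mul1r mulrDl.
  lra.
apply: le_trans (_ : \sum_j (p j * (x j * En p (fun w : n.-tuple 'I_k => clamp a b (Ssum x w))) +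
    n.+1%:R * W ^+ 2 * (p j * En p (fun w : n.-tuple 'I_k => ind (a - W <= Ssum x [tuple of j :: w] <= b + W))))
   <= _).
  apply: ler_sum => j _.
  have := key j.
  have pj := hp j.
  move=> kj.
  have -> : p j * (x j * En p (fun w : n.-tuple 'I_k => clamp a b (Ssum x w))) +
     n.+1%:R * W ^+ 2 * (p j * En p (fun w : n.-tuple 'I_k => ind (a - W <= Ssum x [tuple of j :: w] <= b + W)))
     = p j * (x j * En p (fun w : n.-tuple 'I_k => clamp a b (Ssum x w)) +
      n.+1%:R * W ^+ 2 * En p (fun w : n.-tuple 'I_k => ind (a - W <= Ssum x [tuple of j :: w] <= b + W))) by ring.
  by apply: ler_wpM2l => //; exact: ltW.
rewrite big_split /=.
rewrite (eq_bigr (fun j => (p j * x j) * En p (fun w : n.-tuple 'I_k => clamp a b (Ssum x w)))); last first.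
  by move=> j _; rewrite mulrA.
rewrite -mulr_suml h0 mul0r add0r.
by [].
Qed.

End Conc2.

Section Conc3.
Variable R : realType.
Variable k : nat.
Variable p : 'I_k -> R.
Hypothesis hp : forall i, 0 < p i.
Hypothesis hsum : \sum_(i < k) p i = 1.

Lemma Pn_ext n (E E' : n.-tuple 'I_k -> bool) : (forall w, E w = E' w) -> Pn p E = Pn p E'.
Proof. by move=> h; rewrite !Pn_En; apply: En_ext => w; rewrite h. Qed.

Lemma stein_tail (x : 'I_k -> R) W n y : \sum_j p j * x j = 0 -> (forall j, `|x j| <= W) ->
  0 <= W -> 0 < y ->
  Pn p (fun w : n.-tuple 'I_k => y + W < `|Ssum x w|) * (n%:R * W ^+ 2 + y ^+ 2) <= n%:R * W ^+ 2.
Proof.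
move=> h0 hW W0 y0.
set T := Pn p _.
have hQ : Pn p (fun w : n.-tuple 'I_k => - y - W <= Ssum x w <= y + W) = 1 - T.
  rewrite -(Pn_compl hsum); apply: Pn_ext => w.
  by rewrite real_ltNge ?num_real // ?negbK ?ler_norml ?opprD //; apply: addr_ge0 => //; exact: ltW.
have up := stein hp hsum h0 hW n (a := - y) (b := y) ltac:(lra).
rewrite hQ in up.
have lo : y ^+ 2 * T <= En p (fun w : n.-tuple 'I_k => Ssum x w * clamp (- y) y (Ssum x w)).
  rewrite /T Pn_En -En_scale; apply: (En_le hp) => w.
  set s := Ssum x w.
  rewrite /clamp.
  case: (boolP (y + W < `|s|)) => /= h; rewrite ?mulr1 ?mulr0;
  move: h; rewrite ?ltr_normr ?real_ltNge ?num_real //= ?negbK ?ler_norml;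
  case: (ltP s (- y)) => h1; case: (ltP y s) => h2 //=; try nra.
have Tg : 0 <= T by exact: (Pn_ge0 hp).
nra.
Qed.

Lemma conc (x : 'I_k -> R) W n y : \sum_j p j * x j = 0 -> (forall j, `|x j| <= W) ->
  0 < W -> (0 < n)%N -> 0 < y ->
  Pn p (fun w : n.-tuple 'I_k => y + W < `|Ssum x w|) <= expR (- ((y ^+ 2 / (n%:R * W ^+ 2)) / 24)).
Proof.
move=> h0 hW W0 n0 y0.
set T := Pn p _.
have nR : 0 < n%:R :> R by rewrite ltr0n.
have nW : 0 < n%:R * W ^+ 2 by rewrite mulr_gt0 // exprn_gt0.
set t := y ^+ 2 / (n%:R * W ^+ 2).
have t0 : 0 <= t by rewrite /t divr_ge0 ?sqr_ge0 // ltW.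
have Tg : 0 <= T by exact: (Pn_ge0 hp).
have st := @stein_tail x W n y h0 hW (ltW W0) y0. rewrite -/T in st.
have st2 : T * (1 + t) <= 1.
  have -> : T * (1 + t) = (T * (n%:R * W ^+ 2 + y ^+ 2)) / (n%:R * W ^+ 2).
    by rewrite /t; field; rewrite (gt_eqF W0) (gt_eqF nR).
  by rewrite ler_pdivrMr // mul1r.
have t2 : T <= 2 * expR (- (t / 8)).
  apply: le_trans (_ : Pn p (fun w : n.-tuple 'I_k => y < `|Ssum x w|) <= _).
    by apply: (Pn_le hp) => w /= h; lra.
  have -> : t / 8 = y ^+ 2 / (8 * n%:R * W ^+ 2) by rewrite /t; field; rewrite (gt_eqF W0) (gt_eqF nR).
  exact: tail2.
case: (lerP t 12) => ht.
  set e := expR (- (t / 24)).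
  have e1 : 1 - t / 24 <= e by rewrite /e; have := expR_ge1Dx (- (t / 24)); lra.
  have e0 : 0 < e := expR_gt0 _.
  have f1 : 1 <= (1 + t) * e.
    apply: le_trans (_ : 1 <= (1 + t) * (1 - t / 24)) _; first nra.
    apply: ler_wpM2l; lra.
  have : T <= T * ((1 + t) * e) by rewrite -[X in X <= _]mulr1; apply: ler_wpM2l.
  have : T * (1 + t) * e <= e by rewrite -[X in _ <= X]mul1r; apply: ler_wpM2r => //; exact: ltW.
  rewrite -mulrA. lra.
have e3 : expR (- (t / 8)) = expR (- (t / 24)) * expR (- (t / 12)).
  by rewrite -expRD; congr expR; field.
have e4 : expR (t / 12) * expR (- (t / 12)) = 1 by rewrite expRN mulfV // gt_eqF // expR_gt0.
have e5 : 2 <= expR (t / 12) by apply: le_trans (expR_ge1Dx _); lra.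
have e6 := expR_gt0 (- (t / 12)). have e7 := expR_gt0 (- (t / 24)).
have e8 : expR (- (t / 12)) <= 1 / 2 by nra.
rewrite e3 in t2. nra.
Qed.

End Conc3.

Section Fin.
Variable R : realType.
Variable k : nat.
Variable p : 'I_k -> R.
Hypothesis hp : forall i, 0 < p i.
Implicit Types (D : 'I_k -> 'M[R]_2).
Hypothesis hsum : \sum_(i < k) p i = 1.

Lemma Ssum_shift (X : 'I_k -> R) c n (w : n.-tuple 'I_k) :
  Ssum (fun j => X j - c) w = Ssum X w - n%:R * c.
Proof.
case: w => s /= /eqP <-; elim: s => [|j s IH]; first by rewrite /Ssum !big_nil mul0r subr0.
by rewrite !Ssum_cons IH /= -addn1 natrD; ring.
Qed.

Definition Kd D (dd : ddata D) : R := vnorm (du dd) * vnorm (dv dd) / `|det2 (du dd) (dv dd)|.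

Lemma Kd_pos D (dd : ddata D) : 0 < Kd dd.
Proof.
have hd := dd_det dd.
by rewrite /Kd !mulr_gt0 ?invr_gt0 ?normr_gt0 // ?(vn_pos_l hd) ?(vn_pos_r hd).
Qed.

Lemma Fdev D (dd : ddata D) n (w : n.-tuple 'I_k) :
  let X := Xf (dal dd) in let mu := \sum_j p j * X j in
  (`|ln (opnorm (cprod D w)) - n%:R * `|mu| | <= `|Ssum (fun j => X j - mu) w| + ln (2 * Kd dd))
  /\ 0 <= ln (2 * Kd dd).
Proof.
move=> X mu.
have [b1 b2] := F_bounds dd w.
rewrite -/X -/(Kd dd) in b1 b2.
rewrite Ssum_shift.
have dd1 := ler_dist_dist (Ssum X w) (n%:R * mu).
rewrite normrM normr_nat in dd1.
move: dd1; rewrite ler_norml => /andP[c1 c2].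
split; last lra.
rewrite ler_norml; apply/andP; split; lra.
Qed.

Lemma En_abs n (f : n.-tuple 'I_k -> R) : `|En p f| <= En p (fun w => `|f w|).
Proof.
rewrite ler_norml; apply/andP; split.
  rewrite -(mulN1r (En _ _)) -En_scale; apply: (En_le hp) => w.
  by rewrite mulN1r lerNl -normrN; exact: ler_norm.
by apply: (En_le hp) => w; exact: ler_norm.
Qed.

Lemma s2_le (x : 'I_k -> R) W : (forall j, `|x j| <= W) -> \sum_j p j * x j ^+ 2 <= W ^+ 2.
Proof.
move=> hW; apply: le_trans (_ : \sum_j p j * W ^+ 2 <= _).
  apply: ler_sum => j _; apply: ler_wpM2l; first exact: ltW.
  have := hW j; have := normr_ge0 (x j); rewrite -(real_normK (num_real (x j))); nra.
by rewrite -mulr_suml hsum mul1r.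
Qed.

Lemma Lyap_val D (dd : ddata D) : Lyap p D = `|\sum_j p j * Xf (dal dd) j|.
Proof.
set X := Xf (dal dd). set mu := \sum_j p j * X j.
set x := fun j => X j - mu.
have h0 : \sum_j p j * x j = 0.
  rewrite (eq_bigr (fun j => p j * X j - mu * p j)); last by move=> j _; rewrite /x; ring.
  by rewrite sumrB -mulr_sumr hsum mulr1 subrr.
set W := \sum_j `|x j| + 1.
have Sg : 0 <= \sum_j `|x j| by apply: sumr_ge0 => i _.
have hW : forall j, `|x j| <= W.
  move=> j; rewrite /W (bigD1 j) //= -addrA lerDl; apply: addr_ge0 => //.
  by apply: sumr_ge0 => i _.
have W0 : 0 < W by rewrite /W; lra.
set kap := ln (2 * Kd dd).
have kap0 : 0 <= kap by have [_ ->] := Fdev dd [tuple].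
apply: cvg_lim => //.
apply/cvgrPdist_le => e e0.
set r := W ^+ 2 / e.
have r0 : 0 < r by rewrite /r divr_gt0 // exprn_gt0.
set N := Num.Def.archi_bound ((kap + r / 2) * 2 / e).
have hN : (kap + r / 2) * 2 / e < N%:R.
  by apply: archi_boundP; rewrite !mulr_ge0 // ?invr_ge0 ?ltW //; lra.
exists N => // n /= hn.
set m : R := n.+1%:R.
have m0 : 0 < m by rewrite /m ltr0n.
have mN : N%:R <= m by rewrite /m ler_nat; apply: leq_trans hn _.
set F := fun w : n.+1.-tuple 'I_k => ln (opnorm (cprod D w)).
have A : `|En p F - m * `|mu| | <= kap + (m * W ^+ 2 / r + r) / 2.
  have -> : En p F - m * `|mu| = En p (fun w => F w - m * `|mu|) by rewrite En_sub En_const.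
  apply: le_trans (En_abs _) _.
  apply: le_trans (_ : En p (fun w => (r^-1 / 2) * Ssum x w ^+ 2 + (r / 2 + kap)) <= _).
    apply: (En_le hp) => w.
    have [f1 _] := Fdev dd w. rewrite -/X -/mu -/kap in f1.
    apply: le_trans f1 _.
    set z := Ssum _ w.
    have : 2 * r * `|z| <= z ^+ 2 + r ^+ 2.
      have := sqr_ge0 (`|z| - r); rewrite -[z ^+ 2](real_normK (num_real z)). nra.
    move=> hz.
    have -> : r^-1 / 2 * z ^+ 2 + (r / 2 + kap) = (z ^+ 2 + r ^+ 2) / (2 * r) + kap.
      by field; rewrite gt_eqF.
    rewrite lerD2r ler_pdivlMr; [lra | exact: mulr_gt0].
  rewrite (En_add p (fun w : n.+1.-tuple _ => r^-1 / 2 * Ssum x w ^+ 2) (fun _ => r / 2 + kap)).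
  rewrite (En_scale p (r^-1 / 2) (fun w : n.+1.-tuple _ => Ssum x w ^+ 2)) (En_const hsum) (En_sq hsum n.+1 h0).
  have := s2_le hW.
  set s2 := \sum_j _. move=> hs2.
  have -> : m * W ^+ 2 / r = r^-1 * (m * W ^+ 2) by ring.
  have ri : 0 < r^-1 by rewrite invr_gt0.
  have : r^-1 * (m * s2) <= r^-1 * (m * W ^+ 2).
    by apply: ler_wpM2l; [exact: ltW | apply: ler_wpM2l => //; exact: ltW].
  rewrite -/m. lra.
have -> : `|mu| - m^-1 * En p F = - ((En p F - m * `|mu|) / m).
  by field; rewrite gt_eqF.
rewrite normrN normrM normfV (ger0_norm (ltW m0)) ler_pdivrMr //.
apply: le_trans A _.
have e1 : m * W ^+ 2 / r = m * e by rewrite /r; field; rewrite !gt_eqF // exprn_gt0.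
rewrite e1.
have : (kap + r / 2) * 2 <= m * e.
  have : (kap + r / 2) * 2 / e * e = (kap + r / 2) * 2 by field; rewrite gt_eqF.
  have : (kap + r / 2) * 2 / e * e <= m * e by apply: ler_wpM2r; [exact: ltW | lra].
  lra.
lra.
Qed.

End Fin.

Unset Implicit Arguments.

Theorem theorem2p8 (R : realType) (k : nat) (p : 'I_k -> R)
    (hp : forall i, 0 < p i) (hsum : \sum_(i < k) p i = 1)
    (A : 'I_k -> 'M[R]_2) (hA : Diag A) (hL : 0 < Lyap p A) :
  exists delta c C : R, 0 < delta /\ 0 < c /\
    forall D : 'I_k -> 'M[R]_2, Diag D -> cdist D A < delta ->
    forall eps : R, 0 < eps ->
    forall n : nat, C / eps <= n%:R ->
      Pn p (fun w : n.-tuple 'I_k =>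
              `| n%:R^-1 * ln (opnorm (cprod D w)) - Lyap p D | > eps)
        <= expR (- (c * eps ^+ 2 * n%:R)).
Proof.
have [ddA _] := Diag_data hA.
rewrite (Lyap_val hp hsum ddA) in hL.
set XA := Xf (dal ddA) in hL.
have : [exists j, XA j != 0].
  case: (boolP [exists j, XA j != 0]) => // hn; exfalso.
  move: hn; rewrite negb_exists => /forallP h.
  move: hL; rewrite big1 ?normr0 ?ltxx // => j _.
  by have := h j; rewrite negbK => /eqP ->; rewrite mulr0.
case/existsP => j0 hj0.
have hj0' : `|dal ddA j0| != 1.
  by apply/eqP => e; move: hj0; rewrite /XA /Xf e ln1 eqxx.
have [delta [K0 [B [dp d1 K0p B0 H]]]] := near_A hA hj0'.
set W := 2 * B + 1.
have W0 : 0 < W by rewrite /W; lra.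
set kap := `|ln (2 * K0)|.
have kap0 : 0 <= kap := normr_ge0 _.
set C := 2 * kap + 2 * W + 1.
have C0 : 0 < C by rewrite /C; lra.
exists delta, (96 * W ^+ 2)^-1, C.
split => //; split; first by rewrite invr_gt0 mulr_gt0 // exprn_gt0.
move=> D hD hdist eps e0 n hn.
have [dd _] := Diag_data hD.
have [hK hX] := H D hD hdist dd.
rewrite (Lyap_val hp hsum dd).
set X := Xf (dal dd). set mu := \sum_j p j * X j.
have muB : `|mu| <= B.
  apply: le_trans (ler_norm_sum _ _ _) _.
  apply: le_trans (_ : \sum_j p j * B <= _); last by rewrite -mulr_suml hsum mul1r.
  apply: ler_sum => j _; rewrite normrM (ger0_norm (ltW (hp j))).
  by apply: ler_wpM2l; [exact: ltW (hp j) | exact: hX].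
set x := fun j => X j - mu.
have h0 : \sum_j p j * x j = 0.
  rewrite (eq_bigr (fun j => p j * X j - mu * p j)); last by move=> j _; rewrite /x; ring.
  by rewrite sumrB -mulr_sumr hsum mulr1 subrr.
have hW : forall j, `|x j| <= W.
  move=> j; rewrite /x /W; apply: le_trans (ler_normB _ _) _.
  have := hX j. lra.
have Cn : C <= n%:R * eps by rewrite -ler_pdivrMr.
have n0 : (0 < n)%N.
  rewrite lt0n; apply/eqP => e; move: Cn; rewrite e mul0r; lra.
have nR : 0 < n%:R :> R by rewrite ltr0n.
set y := n%:R * eps / 2.
have y0 : 0 < y by rewrite /y !mulr_gt0.
have kD : ln (2 * Kd dd) <= kap.
  have Kp := Kd_pos dd.
  have h2 : 0 < 2 * Kd dd by rewrite mulr_gt0.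
  have h3 : 0 < 2 * K0 by rewrite mulr_gt0.
  apply: le_trans (ler_norm _); rewrite ler_ln ?posrE // ler_pM2l //.
apply: le_trans (_ : Pn p (fun w : n.-tuple 'I_k => y + W < `|Ssum x w|) <= _).
  apply: (Pn_le hp) => w /= hev.
  have [f1 _] := Fdev p dd w. rewrite -/X -/mu in f1.
  set F := ln _ in hev f1.
  have e1 : `|F - n%:R * `|mu| | = n%:R * `|n%:R^-1 * F - `|mu| |.
    rewrite -[X in _ = X * _](ger0_norm (ltW nR)) -normrM mulrBr mulrA mulfV ?mul1r //.
    by rewrite (gt_eqF nR).
  have : n%:R * eps < `|F - n%:R * `|mu| | by rewrite e1 ltr_pM2l.
  rewrite -/x. move: Cn. rewrite /y /C. lra.
apply: le_trans (conc hp hsum h0 hW W0 n0 y0) _.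
rewrite ler_expR lerN2.
rewrite le_eqVlt; apply/orP; left; apply/eqP.
rewrite /y; field.
by rewrite !gt_eqF.
Qed.
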